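(* Let $\{Y_n;\,n\ge1\}$ be a sequence of random variables with values in a real separable Banach space $\mathbf{B}$ such that $Y_n\to0$ in probability. Let $\{Y_n';\,n\ge1\}$ be an independent copy of $\{Y_n;\,n\ge1\}$ and set $\hat Y_n=Y_n-Y_n'$. Let $\{a_n;\,n\ge1\}$ be positive numbers with $a_n\to\infty$. If there exist constants $0\le\bar\gamma\le\underline\gamma\le\infty$ such that for all $s>0$ $$\limsup_{n\to\infty}\frac1{a_n}\log\mathbb{P}(\|\hat Y_n\|>s)=-\bar\gamma\quad\text{and}\quad\liminf_{n\to\infty}\frac1{a_n}\log\mathbb{P}(\|\hat Y_n\|>s)=-\underline\gamma,$$ then for all $s>0$ $$\limsup_{n\to\infty}\frac1{a_n}\log\mathbb{P}(\|Y_n\|>s)=-\bar\gamma\quad\text{and}\quad\liminf_{n\to\infty}\frac1{a_n}\log\mathbb{P}(\|Y_n\|>s)=-\underline\gamma.$$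
   Context: Convention: $\log0=-\infty$. *)

(* Defs.v *)
From HB Require Import structures.
From mathcomp Require Import all_boot all_order all_algebra.
From mathcomp Require Import all_classical all_reals all_analysis.
Set Implicit Arguments. Unset Strict Implicit. Unset Printing Implicit Defensive.
Import Order.TTheory GRing.Theory Num.Theory.
Import numFieldNormedType.Exports.
Local Open Scope classical_set_scope.
Local Open Scope ring_scope.

Definition separable_space (B : topologicalType) : Prop :=
  exists D : set B, countable D /\ closure D = setT.

Definition borel_set (B : topologicalType) (A : set B) : Prop :=
  <<s [set U : set B | open U] >> A.

Section Defs.
Context (R : realType) (d : measure_display) (T : measurableType d)
        (P : probability T R) (B : normedModType R).

Definition B_random_variable (X : T -> B) : Prop :=
  forall A : set B, borel_set A -> measurable (X @^-1` A).

Definition cvg_in_prob0 (X : nat -> T -> B) : Prop :=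
  forall e : R, 0 < e ->
    (fun n => P [set w | (e < `|X n w|)%R ]) @ \oo --> 0%E.

Definition fdd_event (X : nat -> T -> B) (N : nat) (A : nat -> set B) : set T :=
  \bigcap_(i in `I_N) (X i @^-1` A i).

(* X' is an independent copy of X: X' has the same joint law (all
   finite-dimensional distributions) as X, and the sequence X' is independent
   of the sequence X (product rule on all finite-dimensional cylinder events,
   which generate the product sigma-algebras). *)
Definition independent_copy (X X' : nat -> T -> B) : Prop :=
  (forall n, B_random_variable (X' n)) /\
  (forall N (A : nat -> set B), (forall i, borel_set (A i)) ->
     P (fdd_event X' N A) = P (fdd_event X N A)) /\
  (forall N (A C : nat -> set B), (forall i, borel_set (A i)) ->
     (forall i, borel_set (C i)) ->
     P (fdd_event X N A `&` fdd_event X' N C) =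
     (P (fdd_event X N A) * P (fdd_event X' N C))%E).

(* (1/a_n) log P(||X_n|| > s), with log 0 = -oo. *)
Definition log_rate (a : nat -> R) (X : nat -> T -> B) (s : R) (n : nat) : \bar R :=
  ((a n)^-1)%:E * lne (P [set w | (s < `|X n w|)%R ]).


End Defs.

(* Main.v *)
Require Import Defs.
From HB Require Import structures.
From mathcomp Require Import all_boot all_order all_algebra.
From mathcomp Require Import all_classical all_reals all_analysis.
Import Order.TTheory GRing.Theory Num.Theory.
Import numFieldNormedType.Exports.
Local Open Scope classical_set_scope.
Local Open Scope ring_scope.
From mathcomp Require Import ring lra.
Section limhelp.
Context {R : realType}.
Local Open Scope ereal_scope.
Implicit Types u v : (\bar R)^nat.

Lemma esup_le_near u v : (\forall n \near \oo, u n <= v n) ->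
  limn_esup u <= limn_esup v.
Proof.
move=> [N _ HN]; rewrite !limn_esup_lim.
apply: lee_lim; [exact: is_cvg_esups|exact: is_cvg_esups|].
exists N => // n /= Nn; apply: ge_ereal_sup => _ [k /= nk <-].
apply: le_trans (HN k _) _; first by rewrite /= (leq_trans Nn nk).
by apply: ereal_sup_ubound; exists k.
Qed.

Lemma einf_le_near u v : (\forall n \near \oo, u n <= v n) ->
  limn_einf u <= limn_einf v.
Proof.
move=> [N _ HN]; rewrite !limn_einf_lim.
apply: lee_lim; [exact: is_cvg_einfs|exact: is_cvg_einfs|].
exists N => // n /= Nn; apply: le_ereal_inf_tmp => _ [k /= nk <-].
apply: le_trans (HN k _); last by rewrite /= (leq_trans Nn nk).
by apply: ereal_inf_lbound; exists k.
Qed.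

Lemma esup_shift u (c : R) :
  limn_esup (fun n => c%:E + u n) = c%:E + limn_esup u.
Proof.
have -> : (fun n => c%:E + u n) = -%E \o (fun n => (- c)%:E + (- u n)).
  by apply: funext => n /=; rewrite oppeD// oppeK EFinN oppeK.
rewrite limn_esupN limn_einf_shift// oppeD// EFinN oppeK.
have -> : limn_einf (\- u) = - limn_esup u by exact: limn_einfN.
by rewrite oppeK.
Qed.

Lemma lim_le_eps u v : (forall e : R, (0 < e)%R ->
   \forall n \near \oo, u n <= e%:E + v n) ->
  limn_esup u <= limn_esup v /\ limn_einf u <= limn_einf v.
Proof.
move=> H; split; apply/lee_addgt0Pr => e e0; rewrite addeC.
  by rewrite -esup_shift; apply: esup_le_near; exact: H.
by rewrite -limn_einf_shift//; apply: einf_le_near; exact: H.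
Qed.

End limhelp.
Lemma log_cmp {R : realType} (K a : R) (x y : \bar R) : 0 < K -> 0 < a ->
  x \is a fin_num -> y \is a fin_num -> (0 <= y)%E -> (x <= K%:E * y)%E ->
  ((a^-1)%:E * lne x <= (ln K / a)%:E + (a^-1)%:E * lne y)%E.
Proof.
move=> K0 a0; move: x y => [x| |] [y| |]// _ _ y0 xy.
have [x0|x0] := leP x 0.
  by rewrite le0_lneNy ?lee_fin// gt0_muleNy ?leNye// lte_fin invr_gt0.
have y0' : 0 < y.
  rewrite lt_neqAle -lee_fin y0 andbT; apply/negP => /eqP y0'.
  by move: xy; rewrite -y0' mule0 lee_fin leNgt x0.
rewrite !lne_EFin// -!EFinM -EFinD lee_fin.
have : ln x <= ln K + ln y.
  rewrite -lnM ?posrE// ler_ln ?posrE ?mulr_gt0//=.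
move=> h.
have -> : ln K / a + a^-1 * ln y = a^-1 * (ln K + ln y) by rewrite mulrDr mulrC.
by rewrite ler_wpM2l // invr_ge0 ltW.
Qed.
Lemma bigcup_cnt_meas d (T : measurableType d) (U : Type) (D : set U)
  (F : U -> set T) : countable D -> (forall x, D x -> measurable (F x)) ->
  measurable (\bigcup_(x in D) F x).
Proof.
move=> cD mF; have [->|/set0P[r Dr]] := eqVneq D set0.
  by rewrite bigcup_set0.
move/countable_injP: cD => [f injf].
rewrite [X in measurable X](_ : _ = \bigcup_(n in f @` D) F ('pinv_(cst r) D f n)).
  by apply: bigcup_measurable => _ [x Dx <-]; rewrite pinvKV ?inE//; exact: mF.
apply/seteqP; split=> [t [x Dx Ft]|t [_ [x Dx <-]]].
  by exists (f x); [exists x|rewrite pinvKV ?inE].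
by rewrite pinvKV ?inE// => Ft; exists x.
Qed.

Lemma meas_norm_diff d (T : measurableType d) (R : realType)
  (B : normedModType R) (X X' : T -> B) (s : R) : separable_space B ->
  (forall A, borel_set A -> measurable (X @^-1` A)) ->
  (forall A, borel_set A -> measurable (X' @^-1` A)) ->
  measurable [set w | s < `|X w - X' w|].
Proof.
move=> [D [cD clD]] mX mX'.
pose E (x y : B) (q : rat) : set T :=
  if s + 2 * ratr q < `|x - y| then X @^-1` ball x (ratr q) `&` X' @^-1` ball y (ratr q)
  else set0.
have -> : [set w | s < `|X w - X' w|] =
    \bigcup_(x in D) \bigcup_(y in D) \bigcup_q E x y q.
  apply/seteqP; split => w /=.
  - move=> sN.
    have e0 : 0 < (`|X w - X' w| - s) / 4 by rewrite divr_gt0 // subr_gt0.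
    have [q] := rat_in_itvoo e0.
    rewrite in_itv /= => /andP[q0 qe].
    have cl1 : closure D (X w) by rewrite clD.
    have cl2 : closure D (X' w) by rewrite clD.
    have [x [Dx bx]] := cl1 _ (nbhsx_ballx (X w) _ q0).
    have [y [Dy iby]] := cl2 _ (nbhsx_ballx (X' w) _ q0).
    exists x => //; exists y => //; exists q => //.
    rewrite /E; move: bx iby; rewrite -!ball_normE /ball_ /= => bx iby.
    have t1 : `|X w - X' w| <= `|X w - x| + `|x - y| + `|y - X' w|.
      have -> : X w - X' w = (X w - x) + (x - y) + (y - X' w).
        by rewrite !addrA subrK subrK.
      by apply: le_trans (ler_normD _ _) _; rewrite lerD2r ler_normD.
    have h1 : `|x - X w| < ratr q by rewrite distrC.
    have h2 : `|y - X' w| < ratr q by rewrite distrC.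
    rewrite ifT; last by lra.
    by split.
  - move=> [x Dx [y Dy [q _]]]; rewrite /E.
    case: ifPn => [c [/= bx iby]|_ []//].
    move: bx iby; rewrite -!ball_normE /ball_ /= => bx iby.
    have t1 : `|x - y| <= `|x - X w| + `|X w - X' w| + `|X' w - y|.
      have -> : x - y = (x - X w) + (X w - X' w) + (X' w - y).
        by rewrite !addrA subrK subrK.
      by apply: le_trans (ler_normD _ _) _; rewrite lerD2r ler_normD.
    rewrite (distrC (X' w)) in t1; lra.
apply: bigcup_cnt_meas => // x Dx; apply: bigcup_cnt_meas => // y Dy.
apply: bigcupT_measurable_rat => q; rewrite /E; case: ifP => _ //.
apply: measurableI; [apply: mX|apply: mX']; apply: sub_gen_smallest; exact: ball_open.
Qed.

Lemma comb_eps {R : realType} (a : nat -> R) (c : R) (u v : (\bar R)^nat) :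
  a @ \oo --> +oo -> (forall n, 0 < a n) ->
  (\forall n \near \oo, (u n <= (c / a n)%:E + v n)%E) ->
  forall e : R, 0 < e -> \forall n \near \oo, (u n <= e%:E + v n)%E.
Proof.
move=> ay a0 H e e0; move/cvgryPge : ay => /(_ (c / e)) ha.
apply: filterS2 H ha => n h1 h2; apply: le_trans h1 _.
rewrite leeD2r// lee_fin ler_pdivrMr//.
by rewrite ler_pdivrMr// in h2; rewrite mulrC.
Qed.

Lemma lee_double {R : realType} (x : \bar R) : (x + x <= 2%:E * x)%E.
Proof.
case: x => [r| |]//=.
  by rewrite -EFinD -EFinM lee_fin; lra.
by rewrite mulry gtr0_sg// mul1e.
by rewrite mulrNy gtr0_sg// mul1e.
Qed.

Lemma fine_le_half {R : realType} (x : \bar R) : x \is a fin_num ->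
  `|0 - fine x| < 1 / 2 -> (x <= (1/2)%:E)%E.
Proof. by case: x => [r| |]//= _; rewrite sub0r normrN lee_fin => h; move: (ler_norm r); lra. Qed.

Lemma half_le_1B {R : realType} (x : \bar R) : x \is a fin_num ->
  (x <= (1/2)%:E)%E -> ((1/2)%:E <= 1 - x)%E.
Proof. by case: x => [r| |]//= _; rewrite -EFinB !lee_fin; lra. Qed.

Lemma fin_arith {R : realType} (p c q : \bar R) : p \is a fin_num ->
  c \is a fin_num -> q \is a fin_num -> (0 <= p)%E ->
  ((1/2)%:E <= c)%E -> (p * c <= q)%E -> (p <= 2%:E * q)%E.
Proof.
case: p => [p| |]//; case: c => [c| |]//; case: q => [q| |]// _ _ _.
rewrite -!EFinM !lee_fin => p0 c2 pcq; nra.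
Qed.

Section probhelp.
Context {R : realType} {d : measure_display} {T : measurableType d}
        (P : probability T R) {B : normedModType R}.

Lemma fdd_single (X : nat -> T -> B) n (A : set B) :
  fdd_event X n.+1 (fun i => if i == n then A else setT) = X n @^-1` A.
Proof.
apply/seteqP; split=> w /=.
  by move=> /(_ n (ltnSn n)); rewrite eqxx.
by move=> Xw i /= _; case: eqP => [->|].
Qed.

Lemma borel_open (U : set B) : open U -> borel_set U.
Proof. by move=> oU; apply: sub_sigma_algebra. Qed.

Lemma borel_gt (r : R) : borel_set [set x : B | r < `|x|].
Proof.
apply: borel_open; apply: (@open_comp _ _ (@Num.Def.normr _ B) [set y : R | r < y]).
  by move=> x _; exact: norm_continuous.
exact: open_gt.
Qed.

Lemma prob_fin (A : set T) : measurable A -> P A \is a fin_num.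
Proof.
move=> mA; rewrite ge0_fin_numE ?measure_ge0//.
exact: le_lt_trans (probability_le1 P mA) (ltry _).
Qed.

End probhelp.

Theorem lemma3p2 (R : realType) (d : measure_display) (T : measurableType d)
  (P : probability T R) (B : completeNormedModType R)
  (Y Y' : nat -> T -> B) (a : nat -> R) (gbar glow : \bar R) :
  separable_space B ->
  (forall n, B_random_variable (Y n)) ->
  cvg_in_prob0 P Y ->
  independent_copy P Y Y' ->
  (forall n, 0 < a n) ->
  a @ \oo --> +oo ->
  (0 <= gbar)%E -> (gbar <= glow)%E ->
  (forall s : R, 0 < s ->
     limn_esup (log_rate P a (fun n w => Y n w - Y' n w) s) = (- gbar)%E /\
     limn_einf (log_rate P a (fun n w => Y n w - Y' n w) s) = (- glow)%E) ->
  forall s : R, 0 < s ->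
    limn_esup (log_rate P a Y s) = (- gbar)%E /\
    limn_einf (log_rate P a Y s) = (- glow)%E.
Proof.
move=> sepB rvY cvgY [rvY' [distY indep]] a0 ay _ _ H s s0.
have bT : borel_set [set: B] by apply: borel_open; exact: openT.
have same n A : borel_set A -> P (Y' n @^-1` A) = P (Y n @^-1` A).
  move=> bA; have := distY n.+1 (fun i => if i == n then A else setT).
  by rewrite !fdd_single => ->// i; case: ifP.
have ind n A C : borel_set A -> borel_set C ->
    P (Y n @^-1` A `&` Y' n @^-1` C) = (P (Y n @^-1` A) * P (Y' n @^-1` C))%E.
  move=> bA bC.
  have := indep n.+1 (fun i => if i == n then A else setT)
                     (fun i => if i == n then C else setT).
  by rewrite !fdd_single => ->// i; case: ifP.
have mY n r : measurable [set w | r < `|Y n w|] by exact: rvY (borel_gt r).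
have mY' n r : measurable [set w | r < `|Y' n w|] by exact: rvY' (borel_gt r).
have mH n r : measurable [set w | r < `|Y n w - Y' n w|].
  exact: meas_norm_diff sepB (rvY n) (rvY' n).
have low n (r : R) : (P [set w | (2 * r < `|Y n w - Y' n w|)%R] <=
                2%:E * P [set w | (r < `|Y n w|)%R])%E.
  apply: le_trans (le_measure _ _ _ (_ : _ `<=` [set w | r < `|Y n w|] `|` [set w | r < `|Y' n w|])) _.
  - by rewrite inE.
  - by rewrite inE; apply: measurableU.
  - move=> w /= h; have := ler_normB (Y n w) (Y' n w).
    by case: (ltP r `|Y n w|) => h1; [left|right => /=; lra].
  apply: le_trans (measureU2 _ (mY n r) (mY' n r)) _.
  have e : P [set w | (r < `|Y' n w|)%R] = P [set w | (r < `|Y n w|)%R].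
    exact: (same n _ (borel_gt r)).
  have e2 : (P [set w | (r < `|Y' n w|)%R] <= P [set w | (r < `|Y n w|)%R])%E.
    by rewrite e.
  apply: le_trans (leeD2l _ e2) _.
  exact: lee_double.
have s20 : 0 < s / 2 by rewrite divr_gt0.
have h20 : 0 < 1 / 2 :> R by rewrite divr_gt0.
have up : \forall n \near \oo,
    (P [set w | (s < `|Y n w|)%R] <= 2%:E * P [set w | (s / 2 < `|Y n w - Y' n w|)%R])%E.
  have := cvgY (s / 2) s20.
  move=> /fine_cvgP [_ /cvgrPdist_lt /(_ (1/2) h20)] hh.
  apply: filterS hh => n hn.
  pose O := [set x : B | (s / 2 < `|x|)%R].
  have pY : (P (Y n @^-1` O) <= (1/2)%:E)%E.
    exact: fine_le_half (prob_fin P _ (rvY n _ (borel_gt _))) hn.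
  have bC : borel_set (~` O) by apply: sigma_algebraC; exact: borel_gt.
  have pC : ((1/2)%:E <= P (Y' n @^-1` ~` O))%E.
    rewrite preimage_setC probability_setC; last exact: rvY' (borel_gt _).
    have pY' : (P (Y' n @^-1` O) <= (1/2)%:E)%E.
      by rewrite same//; exact: borel_gt.
    apply: half_le_1B pY'; exact: prob_fin P _ (rvY' n _ (borel_gt _)).
  have key := ind n _ _ (borel_gt s) bC.
  apply: (fin_arith _ _ _ _ _ _ _ pC).
  - exact: prob_fin P _ (rvY n _ (borel_gt _)).
  - exact: prob_fin P _ (rvY' n _ bC).
  - exact: prob_fin P _ (mH n _).
  - exact: measure_ge0.
  rewrite -key; apply: le_measure.
  - by rewrite inE; apply: measurableI; [exact: rvY (borel_gt _)|exact: rvY' bC].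
  - by rewrite inE; exact: mH.
  move=> w [/= h1 h2]; rewrite /O /= in h2; move/negP: h2; rewrite -leNgt => h2.
  have : `|Y n w| <= `|Y n w - Y' n w| + `|Y' n w|.
    by rewrite -{1}(subrK (Y' n w) (Y n w)) ler_normD.
  lra.
have [U1 U2] : (limn_esup (log_rate P a Y s) <=
     limn_esup (log_rate P a (fun n w => (Y n w - Y' n w)%R) (s / 2)))%E /\
    (limn_einf (log_rate P a Y s) <=
     limn_einf (log_rate P a (fun n w => (Y n w - Y' n w)%R) (s / 2)))%E.
  apply: lim_le_eps; apply: (comb_eps _ (ln 2) _ _ ay a0).
  apply: filterS up => n hn; rewrite /log_rate.
  apply: log_cmp => //.
  - exact: prob_fin P _ (mY n _).
  - exact: prob_fin P _ (mH n _).
have [L1 L2] : (limn_esup (log_rate P a (fun n w => (Y n w - Y' n w)%R) (2 * s)) <=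
     limn_esup (log_rate P a Y s))%E /\
    (limn_einf (log_rate P a (fun n w => (Y n w - Y' n w)%R) (2 * s)) <=
     limn_einf (log_rate P a Y s))%E.
  apply: lim_le_eps; apply: (comb_eps _ (ln 2) _ _ ay a0).
  apply: nearW => n; rewrite /log_rate.
  apply: log_cmp => //.
  - exact: prob_fin P _ (mH n _).
  - exact: prob_fin P _ (mY n _).
have [E1 E2] := H (s / 2) s20.
have s2 : 0 < 2 * s by rewrite mulr_gt0.
have [F1 F2] := H (2 * s) s2.
rewrite E1 E2 in U1 U2; rewrite F1 F2 in L1 L2.
by split; apply/le_anti/andP; split.
Qed.
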